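(* Let $A$ be a partially ordered set that has a top element $\top$ and a bottom element $\bot$. Then every passable game over $A$ is equivalent to a monotone game over $A$.
   Context: Games over a poset $A$ are defined inductively: for each $a\in A$ there is an atomic game $[a]$ (often written $a$), which has no options; and if $L$ and $R$ are non-empty sets of games, then $\{L\mid R\}$ is a composite game with set of left options $L$ and set of right options $R$. The relations $\le$ and $\lhd$ on games over $A$ are defined by simultaneous recursion: $G\le H$ iff (1) every left option $G^L$ of $G$ satisfies $G^L\lhd H$, (2) every right option $H^R$ of $H$ satisfies $G\lhd H^R$, and (3) if $G$ or $H$ is atomic then $G\lhd H$; and $G\lhd H$ iff (1) some right option $G^R$ of $G$ satisfies $G^R\le H$, or (2) some left option $H^L$ of $H$ satisfies $G\le H^L$, or (3) $G=[a]$ and $H=[b]$ are both atomic and $a\le b$ in $A$. Games $G,H$ are equivalent, $G\equiv H$, if $G\le H$ and $H\le G$. A game $G$ is passable if $G\lhd G$ and (recursively) all its left and right options are passable. A left option $G^L$ of $G$ is good if $G\le G^L$; a right option $G^R$ is good if $G^R\le G$. A game is monotone if all of its left and right options are good and (recursively) all its options are monotone; atomic games are monotone. *)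

(* Defs.v *)
Set Implicit Arguments.

(* Games over a type A (the poset carrier).  A composite game {L | R} is
   represented by two non-empty indexed families of options. *)
Inductive game (A : Type) : Type :=
| Atom : A -> game A
| Comp : forall (I J : Type), (I -> game A) -> (J -> game A) ->
         inhabited I -> inhabited J -> game A.

Arguments Atom {A} _.
Arguments Comp {A} I J _ _ _ _.

Definition is_atom {A : Type} (G : game A) : Prop :=
  match G with Atom _ => True | Comp _ _ _ _ _ _ => False end.

(* Simultaneous recursion: cmp leA G H = (G <= H, G <| H). *)
Fixpoint cmp {A : Type} (leA : A -> A -> Prop) (G : game A) {struct G}
  : game A -> Prop * Prop :=
  fix cmpH (H : game A) {struct H} : Prop * Prop :=
    let lhd : Prop :=
      (match G with
       | Atom _ => False
       | Comp _ _ _ r _ _ => exists j, fst (cmp leA (r j) H)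
       end)
      \/
      (match H with
       | Atom _ => False
       | Comp _ _ l _ _ _ => exists i, fst (cmpH (l i))
       end)
      \/
      (match G, H with
       | Atom a, Atom b => leA a b
       | _, _ => False
       end) in
    let le : Prop :=
      (match G with
       | Atom _ => True
       | Comp _ _ l _ _ _ => forall i, snd (cmp leA (l i) H)
       end)
      /\
      (match H with
       | Atom _ => True
       | Comp _ _ _ r _ _ => forall j, snd (cmpH (r j))
       end)
      /\
      ((is_atom G \/ is_atom H) -> lhd) in
    (le, lhd).

Definition game_le {A : Type} (leA : A -> A -> Prop) (G H : game A) : Prop :=
  fst (cmp leA G H).
Definition game_lhd {A : Type} (leA : A -> A -> Prop) (G H : game A) : Prop :=
  snd (cmp leA G H).
Definition game_equiv {A : Type} (leA : A -> A -> Prop) (G H : game A) : Prop :=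
  game_le leA G H /\ game_le leA H G.

Fixpoint passable {A : Type} (leA : A -> A -> Prop) (G : game A) : Prop :=
  game_lhd leA G G /\
  match G with
  | Atom _ => True
  | Comp _ _ l r _ _ => (forall i, passable leA (l i)) /\ (forall j, passable leA (r j))
  end.

Fixpoint monotone {A : Type} (leA : A -> A -> Prop) (G : game A) : Prop :=
  match G with
  | Atom _ => True
  | Comp _ _ l r _ _ =>
      (forall i, game_le leA G (l i)) /\ (forall j, game_le leA (r j) G) /\
      (forall i, monotone leA (l i)) /\ (forall j, monotone leA (r j))
  end.

(* Main.v *)
Require Import Defs.
From Stdlib Require Import ClassicalEpsilon.

Definition isL {A} (X G : game A) : Prop :=
  match G with Atom _ => False | Comp _ _ l _ _ _ => exists i, X = l i end.
Definition isR {A} (Y G : game A) : Prop :=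
  match G with Atom _ => False | Comp _ _ _ r _ _ => exists j, Y = r j end.

Lemma le_elim {A} (leA : A -> A -> Prop) (G H : game A) :
  game_le leA G H ->
  (forall X, isL X G -> game_lhd leA X H) /\
  (forall Y, isR Y H -> game_lhd leA G Y) /\
  ((is_atom G \/ is_atom H) -> game_lhd leA G H).
Proof.
  unfold game_le, game_lhd.
  destruct G as [a|I J l r hI hJ]; destruct H as [b|I' J' l' r' hI' hJ'];
  simpl; intros [h1 [h2 h3]]; repeat split;
  try (intros X [i ->]); try (intros X []); eauto.
Qed.

Lemma le_intro {A} (leA : A -> A -> Prop) (G H : game A) :
  (forall X, isL X G -> game_lhd leA X H) ->
  (forall Y, isR Y H -> game_lhd leA G Y) ->
  ((is_atom G \/ is_atom H) -> game_lhd leA G H) ->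
  game_le leA G H.
Proof.
  unfold game_le, game_lhd.
  destruct G as [a|I J l r hI hJ]; destruct H as [b|I' J' l' r' hI' hJ'];
  simpl; intros h1 h2 h3; repeat split; intros;
  try apply h1; try apply h2; try apply h3; eauto.
Qed.

Lemma lhd_elim {A} (leA : A -> A -> Prop) (G H : game A) :
  game_lhd leA G H ->
  (exists Y, isR Y G /\ game_le leA Y H) \/
  (exists X, isL X H /\ game_le leA G X) \/
  (exists a b, G = Atom a /\ H = Atom b /\ leA a b).
Proof.
  unfold game_le, game_lhd.
  destruct G as [a|I J l r hI hJ]; destruct H as [b|I' J' l' r' hI' hJ'];
  simpl; intros [h|[h|h]];
  try destruct h as [k hk]; try contradiction;
  eauto 10.
Qed.

Lemma lhd_introR {A} (leA : A -> A -> Prop) (G H Y : game A) :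
  isR Y G -> game_le leA Y H -> game_lhd leA G H.
Proof.
  unfold game_le, game_lhd.
  destruct G as [a|I J l r hI hJ]; [intros []|]; intros [j ->] h;
  destruct H; simpl; left; exists j; exact h.
Qed.

Lemma lhd_introL {A} (leA : A -> A -> Prop) (G H X : game A) :
  isL X H -> game_le leA G X -> game_lhd leA G H.
Proof.
  unfold game_le, game_lhd.
  destruct H as [a|I J l r hI hJ]; [intros []|]; intros [j ->] h;
  destruct G; simpl; right; left; exists j; exact h.
Qed.

Lemma lhd_atoms {A} (leA : A -> A -> Prop) a b :
  leA a b -> game_lhd leA (Atom a) (Atom b).
Proof. intro h. unfold game_lhd; simpl; right; right; exact h. Qed.
Lemma le_atoms {A} (leA : A -> A -> Prop) a b :
  leA a b -> game_le leA (Atom a) (Atom b).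
Proof.
  intro h; apply le_intro; [intros X []|intros Y []|intros _; apply lhd_atoms; exact h].
Qed.

Lemma le_refl_g {A} (leA : A -> A -> Prop) (rf : forall a, leA a a) :
  forall G : game A, game_le leA G G.
Proof.
  induction G as [a|I J l IHl r IHr hI hJ].
  - apply le_atoms, rf.
  - apply le_intro.
    + intros X [i ->]. eapply lhd_introL; [exists i; reflexivity| apply IHl].
    + intros Y [j ->]. eapply lhd_introR; [exists j; reflexivity| apply IHr].
    + intros [[]|[]].
Qed.

Lemma le_top {A} (leA : A -> A -> Prop) (top : A) (tm : forall a, leA a top) :
  forall K : game A, game_le leA K (Atom top) /\ game_lhd leA K (Atom top).
Proof.
  induction K as [a|I J l IHl r IHr hI hJ].
  - split; [apply le_atoms, tm| apply lhd_atoms, tm].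
  - assert (H2 : game_lhd leA (Comp I J l r hI hJ) (Atom top)).
    { destruct hJ as [j]. eapply lhd_introR; [exists j; reflexivity| apply IHr]. }
    split; [|exact H2].
    apply le_intro; [intros X [i ->]; apply IHl | intros Y [] | intros _; exact H2].
Qed.

Lemma bot_le {A} (leA : A -> A -> Prop) (bot : A) (bm : forall a, leA bot a) :
  forall K : game A, game_le leA (Atom bot) K /\ game_lhd leA (Atom bot) K.
Proof.
  induction K as [a|I J l IHl r IHr hI hJ].
  - split; [apply le_atoms, bm| apply lhd_atoms, bm].
  - assert (H2 : game_lhd leA (Atom bot) (Comp I J l r hI hJ)).
    { destruct hI as [i]. eapply lhd_introL; [exists i; reflexivity| apply IHl]. }
    split; [|exact H2].
    apply le_intro; [intros X [] | intros Y [j ->]; apply IHr | intros _; exact H2].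
Qed.

Definition opt {A} (X G : game A) : Prop := isL X G \/ isR X G.

Lemma opt_wf {A} : well_founded (@opt A).
Proof.
  intro G; induction G as [a|I J l IHl r IHr hI hJ]; constructor.
  - intros y [[]|[]].
  - intros y [[i ->]|[j ->]]; auto.
Qed.

Definition TR {A} (leA : A -> A -> Prop) (a b c : game A) : Prop :=
  (game_le leA a b -> game_le leA b c -> game_le leA a c) /\
  (game_le leA a b -> game_lhd leA b c -> game_lhd leA a c) /\
  (game_lhd leA a b -> game_le leA b c -> game_lhd leA a c).

Lemma trans_all {A} (leA : A -> A -> Prop)
  (tr : forall a b c, leA a b -> leA b c -> leA a c) :
  forall a b c : game A, TR leA a b c.
Proof.
  intro a; induction (opt_wf a) as [a _ IHa].
  intro b; induction (opt_wf b) as [b _ IHb].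
  intro c; induction (opt_wf c) as [c _ IHc].
  assert (T3 : game_lhd leA a b -> game_le leA b c -> game_lhd leA a c).
  { intros hab hbc.
    destruct (lhd_elim leA a b hab) as [[Y [hY hYb]]|[[X [hX haX]]|[p [q [-> [-> hpq]]]]]].
    - eapply lhd_introR; [exact hY|]. apply (proj1 (IHa Y (or_intror hY) b c)); assumption.
    - destruct (le_elim leA b c hbc) as [h1 _].
      apply (proj1 (proj2 (IHb X (or_introl hX) c))); [exact haX| apply h1; exact hX].
    - destruct (le_elim leA (Atom q) c hbc) as [_ [_ h3]].
      specialize (h3 (or_introl I)).
      destruct (lhd_elim leA _ _ h3) as [[Y [[] _]]|[[X [hX hqX]]|[q' [r [e [-> hqr]]]]]].
      + eapply lhd_introL; [exact hX|].
        apply (proj1 (IHc X (or_introl hX))); [apply le_atoms; exact hpq| exact hqX].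
      + injection e as <-. apply lhd_atoms. eauto. }
  assert (T2 : game_le leA a b -> game_lhd leA b c -> game_lhd leA a c).
  { intros hab hbc.
    destruct (lhd_elim leA b c hbc) as [[Y [hY hYc]]|[[X [hX hbX]]|[q [r [-> [-> hqr]]]]]].
    - destruct (le_elim leA a b hab) as [_ [h2 _]].
      apply (proj2 (proj2 (IHb Y (or_intror hY) c))); [apply h2; exact hY| exact hYc].
    - eapply lhd_introL; [exact hX|]. apply (proj1 (IHc X (or_introl hX))); assumption.
    - destruct (le_elim leA a (Atom q) hab) as [_ [_ h3]].
      specialize (h3 (or_intror I)).
      destruct (lhd_elim leA _ _ h3) as [[Y [hY hYq]]|[[X [[] _]]|[p [q' [-> [e hpq]]]]]].
      + eapply lhd_introR; [exact hY|].
        apply (proj1 (IHa Y (or_intror hY) (Atom q) (Atom r))); [exact hYq| apply le_atoms; exact hqr].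
      + injection e as <-. apply lhd_atoms. eauto. }
  split; [|split; assumption].
  intros hab hbc.
  destruct (le_elim leA a b hab) as [a1 [a2 a3]].
  destruct (le_elim leA b c hbc) as [b1 [b2 b3]].
  apply le_intro.
  - intros X hX. apply (proj2 (proj2 (IHa X (or_introl hX) b c))); [apply a1; exact hX| exact hbc].
  - intros Y hY. apply (proj1 (proj2 (IHc Y (or_intror hY)))); [exact hab| apply b2; exact hY].
  - intros [ha|hc].
    + apply T3; [apply a3; left; exact ha| exact hbc].
    + apply T2; [exact hab| apply b3; right; exact hc].
Qed.
Lemma lt_topL {A} (leA : A -> A -> Prop) (top : A) (tm : forall a, leA a top)
  K I J (l : I -> game A) r hI hJ i :
  l i = Atom top -> game_lhd leA K (Comp I J l r hI hJ).
Proof. intro e. eapply lhd_introL; [exists i; reflexivity|]. rewrite e. apply le_top, tm. Qed.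

Lemma lt_botR {A} (leA : A -> A -> Prop) (bot : A) (bm : forall a, leA bot a)
  K I J (l : I -> game A) r hI hJ j :
  r j = Atom bot -> game_lhd leA (Comp I J l r hI hJ) K.
Proof. intro e. eapply lhd_introR; [exists j; reflexivity|]. rewrite e. apply bot_le, bm. Qed.

Lemma le_upL {A} (leA : A -> A -> Prop) (top : A) (tm : forall a, leA a top)
  K I J (l : I -> game A) r hI hJ i :
  l i = Atom top -> (forall j, game_lhd leA K (r j)) -> game_le leA K (Comp I J l r hI hJ).
Proof.
  intros e h. apply le_intro.
  - intros X _. eapply lt_topL; eauto.
  - intros Y [j ->]. apply h.
  - intros _. eapply lt_topL; eauto.
Qed.

Lemma le_dnR {A} (leA : A -> A -> Prop) (bot : A) (bm : forall a, leA bot a)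
  K I J (l : I -> game A) r hI hJ j :
  r j = Atom bot -> (forall i, game_lhd leA (l i) K) -> game_le leA (Comp I J l r hI hJ) K.
Proof.
  intros e h. apply le_intro.
  - intros X [i ->]. apply h.
  - intros Y _. eapply lt_botR; eauto.
  - intros _. eapply lt_botR; eauto.
Qed.

Definition pr {A} (P Q : game A) : game A :=
  Comp unit unit (fun _ => P) (fun _ => Q) (inhabits tt) (inhabits tt).

Definition LZg {A} (T B V : game A) I (Mx : I -> game A) : game A :=
  Comp (option I) unit
    (fun o => match o with Some i => pr T (pr (Mx i) B) | None => pr T V end)
    (fun _ => B) (inhabits None) (inhabits tt).

Definition RZg {A} (T B U : game A) J (My : J -> game A) : game A :=
  Comp unit (option J) (fun _ => T)
    (fun o => match o with Some j => pr (pr T (My j)) B | None => pr U B end)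
    (inhabits tt) (inhabits None).

Definition Mk {A} (T B U V : game A) I J (Mx : I -> game A) (My : J -> game A) : game A :=
  pr (pr T (LZg T B V I Mx)) (pr (RZg T B U J My) B).

Lemma build_ok {A} (leA : A -> A -> Prop)
  (rf : forall a, leA a a)
  (tr : forall a b c, leA a b -> leA b c -> leA a c)
  (top bot : A) (tm : forall a, leA a top) (bm : forall a, leA bot a)
  I J (l : I -> game A) (r : J -> game A) hI hJ
  (Mx : I -> game A) (My : J -> game A) (U V : game A)
  (hMx : forall i, monotone leA (Mx i) /\ game_equiv leA (l i) (Mx i))
  (hMy : forall j, monotone leA (My j) /\ game_equiv leA (r j) (My j))
  (pMx : forall i, game_lhd leA (Mx i) (Mx i))
  (pMy : forall j, game_lhd leA (My j) (My j))
  (U1 : game_le leA (Comp I J l r hI hJ) U) (U2 : game_lhd leA U (Comp I J l r hI hJ))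
  (U3 : game_lhd leA U U) (U4 : monotone leA U)
  (V1 : game_le leA V (Comp I J l r hI hJ)) (V2 : game_lhd leA (Comp I J l r hI hJ) V)
  (V3 : game_lhd leA V V) (V4 : monotone leA V) :
  monotone leA (Mk (Atom top) (Atom bot) U V I J Mx My) /\
  game_equiv leA (Comp I J l r hI hJ) (Mk (Atom top) (Atom bot) U V I J Mx My).
Proof.
  set (G := Comp I J l r hI hJ).
  set (T := Atom top). set (B := Atom bot).
  pose proof (trans_all leA tr) as TRA.
  assert (F3 : forall K Y, game_lhd leA K Y -> game_le leA K (pr T Y)).
  { intros K Y h. eapply le_upL with (i := tt); [exact tm|reflexivity|intros; exact h]. }
  assert (F4 : forall K X, game_lhd leA X K -> game_le leA (pr X B) K).
  { intros K X h. eapply le_dnR with (j := tt); [exact bm|reflexivity|intros; exact h]. }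
  assert (MU : forall Y, game_lhd leA Y Y -> monotone leA Y -> monotone leA (pr T Y)).
  { intros Y h m. simpl. split; [intros; apply le_top, tm|split; [intros; apply F3, h|split; intros; [exact Logic.I|exact m]]]. }
  assert (MD : forall X, game_lhd leA X X -> monotone leA X -> monotone leA (pr X B)).
  { intros X h m. simpl. split; [intros; apply F4, h|split; [intros; apply bot_le, bm|split; intros; [exact m|exact Logic.I]]]. }
  set (LZ := LZg T B V I Mx). set (RZ := RZg T B U J My).
  set (M := Mk T B U V I J Mx My).
  assert (LZb : forall K, game_lhd leA LZ K).
  { intro K. eapply lt_botR with (j := tt); [exact bm|reflexivity]. }
  assert (RZt : forall K, game_lhd leA K RZ).
  { intro K. eapply lt_topL with (i := tt); [exact tm|reflexivity]. }
  assert (HMG : game_le leA M G).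
  { apply le_intro.
    - intros X [u ->]. eapply lhd_introR; [exists tt; reflexivity|].
      apply le_intro.
      + intros X [[i|] ->].
        * eapply lhd_introR; [exists tt; reflexivity|]. apply F4.
          eapply lhd_introL; [exists i; reflexivity|]. apply (proj2 (hMx i)).
        * eapply lhd_introR; [exists tt; reflexivity|]. exact V1.
      + intros; apply LZb.
      + intros [[]|[]].
    - intros Y [j ->]. eapply lhd_introR; [exists tt; reflexivity|]. apply F4.
      eapply lhd_introR; [exists (Some j); reflexivity|]. apply F4.
      eapply lhd_introR; [exists tt; reflexivity|]. apply (proj2 (hMy j)).
    - intros [[]|[]]. }
  assert (HGM : game_le leA G M).
  { apply le_intro.
    - intros X [i ->]. eapply lhd_introL; [exists tt; reflexivity|]. apply F3.
      eapply lhd_introL; [exists (Some i); reflexivity|]. apply F3.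
      eapply lhd_introL; [exists tt; reflexivity|]. apply (proj1 (proj2 (hMx i))).
    - intros Y [u ->]. eapply lhd_introL; [exists tt; reflexivity|].
      apply le_intro.
      + intros; apply RZt.
      + intros Y [[j|] ->].
        * eapply lhd_introL; [exists tt; reflexivity|]. apply F3.
          apply (proj2 (proj2 (TRA G (r j) (My j)))).
          -- destruct (le_elim leA G G (le_refl_g leA rf G)) as [_ [h _]].
             apply h. exists j; reflexivity.
          -- apply (proj1 (proj2 (hMy j))).
        * eapply lhd_introL; [exists tt; reflexivity|]. exact U1.
      + intros [[]|[]].
    - intros [[]|[]]. }
  split; [|split; assumption].
  assert (mLZ : monotone leA LZ).
  { simpl. split; [|split; [|split]].
    - intros [i|]; apply F3; apply LZb.
    - intros; apply bot_le, bm.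
    - intros [i|].
      + apply MU; [eapply lt_botR with (j := tt); [exact bm|reflexivity]|].
        apply MD; [apply pMx| apply hMx].
      + apply MU; assumption.
    - intros; exact Logic.I. }
  assert (mRZ : monotone leA RZ).
  { simpl. split; [|split; [|split]].
    - intros; apply le_top, tm.
    - intros [j|]; apply F4; apply RZt.
    - intros; exact Logic.I.
    - intros [j|].
      + apply MD; [eapply lt_topL with (i := tt); [exact tm|reflexivity]|].
        apply MU; [apply pMy| apply hMy].
      + apply MD; assumption. }
  simpl. split; [|split; [|split]].
  - intros _. apply F3. eapply lhd_introL; [exists None; reflexivity|]. apply F3.
    apply (proj1 (proj2 (TRA M G V))); assumption.
  - intros _. apply F4. eapply lhd_introR; [exists None; reflexivity|]. apply F4.
    apply (proj2 (proj2 (TRA U G M))); assumption.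
  - intros _. apply MU; [apply LZb| exact mLZ].
  - intros _. apply MD; [apply RZt| exact mRZ].
Qed.
Lemma pass_transfer {A} (leA : A -> A -> Prop)
  (tr : forall a b c, leA a b -> leA b c -> leA a c) (G H : game A) :
  game_lhd leA G G -> game_equiv leA G H -> game_lhd leA H H.
Proof.
  intros hG [h1 h2].
  pose proof (trans_all leA tr) as TRA.
  apply (proj2 (proj2 (TRA H G H))); [|exact h1].
  apply (proj1 (proj2 (TRA H G G))); assumption.
Qed.

Lemma pass_lhd {A} (leA : A -> A -> Prop) (G : game A) :
  passable leA G -> game_lhd leA G G.
Proof. destruct G; intro h; exact (proj1 h). Qed.

Theorem theorem6p5 (A : Type) (leA : A -> A -> Prop)
  (le_refl : forall a, leA a a)
  (le_antisym : forall a b, leA a b -> leA b a -> a = b)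
  (le_trans : forall a b c, leA a b -> leA b c -> leA a c)
  (top bot : A) (top_max : forall a, leA a top) (bot_min : forall a, leA bot a)
  (G : game A) :
  passable leA G -> exists H : game A, monotone leA H /\ game_equiv leA G H.
Proof.
  pose proof (trans_all leA le_trans) as TRA.
  induction G as [a|I J l IHl r IHr hI hJ]; intro HP.
  - exists (Atom a). split; [exact Logic.I| split; apply le_refl_g, le_refl].
  - destruct HP as [HGG [HPl HPr]].
    pose (fx := fun i => constructive_indefinite_description _ (IHl i (HPl i))).
    pose (fy := fun j => constructive_indefinite_description _ (IHr j (HPr j))).
    pose (Mx := fun i => proj1_sig (fx i)).
    pose (My := fun j => proj1_sig (fy j)).
    assert (hMx : forall i, monotone leA (Mx i) /\ game_equiv leA (l i) (Mx i))
      by (intro i; exact (proj2_sig (fx i))).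
    assert (hMy : forall j, monotone leA (My j) /\ game_equiv leA (r j) (My j))
      by (intro j; exact (proj2_sig (fy j))).
    assert (pMx : forall i, game_lhd leA (Mx i) (Mx i)).
    { intro i. apply (pass_transfer leA le_trans (l i)); [apply (pass_lhd leA _ (HPl i))| apply hMx]. }
    assert (pMy : forall j, game_lhd leA (My j) (My j)).
    { intro j. apply (pass_transfer leA le_trans (r j)); [apply (pass_lhd leA _ (HPr j))| apply hMy]. }
    set (G := Comp I J l r hI hJ) in *.
    assert (Gr : forall j, game_lhd leA G (r j)).
    { destruct (le_elim leA G G (le_refl_g leA le_refl G)) as [_ [h _]].
      intro j; apply h; exists j; reflexivity. }
    assert (F3 : forall K Y, game_lhd leA K Y -> game_le leA K (pr (Atom top) Y)).
    { intros K Y h. eapply le_upL with (i := tt); [exact top_max|reflexivity|intros; exact h]. }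
    assert (F4 : forall K X, game_lhd leA X K -> game_le leA (pr X (Atom bot)) K).
    { intros K X h. eapply le_dnR with (j := tt); [exact bot_min|reflexivity|intros; exact h]. }
    destruct (lhd_elim leA G G HGG) as [[Y [[j0 ->] hY]]|[[X [[i0 ->] hX]]|[p [q [e _]]]]].
    + assert (A1 : game_le leA (My j0) G).
      { apply (proj1 (TRA _ (r j0) _)); [apply hMy| exact hY]. }
      assert (A2 : game_lhd leA G (My j0)).
      { apply (proj2 (proj2 (TRA _ (r j0) _))); [apply Gr| apply hMy]. }
      exists (Mk (Atom top) (Atom bot) (pr (Atom top) (My j0)) (My j0) I J Mx My).
      apply build_ok; auto.
      * eapply lhd_introR; [exists tt; reflexivity| exact A1].
      * eapply lt_topL with (i := tt); [exact top_max|reflexivity].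
      * simpl. split; [intros; apply le_top, top_max|split; [intros; apply F3, pMy|split; intros; [exact Logic.I|apply hMy]]].
      * apply hMy.
    + assert (B1 : game_le leA G (Mx i0)).
      { apply (proj1 (TRA _ (l i0) _)); [exact hX| apply hMx]. }
      assert (B2 : game_lhd leA (Mx i0) G).
      { eapply lhd_introL; [exists i0; reflexivity| apply hMx]. }
      exists (Mk (Atom top) (Atom bot) (Mx i0) (pr (Mx i0) (Atom bot)) I J Mx My).
      apply build_ok; auto.
      * apply hMx.
      * eapply lhd_introL; [exists tt; reflexivity| exact B1].
      * eapply lt_botR with (j := tt); [exact bot_min|reflexivity].
      * simpl. split; [intros; apply F4, pMx|split; [intros; apply bot_le, bot_min|split; intros; [apply hMx|exact Logic.I]]].
    + discriminate e.
Qed.
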